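(* Let $a_1\in D$ be a pure quaternion with $N(a_1)\in -u\mathbb{Q}_2^{*2}$, where $u$ is a unit of non-minimal quadratic defect (i.e. $u\in-\mathbb{Z}_2^{*2}\cup-5\mathbb{Z}_2^{*2}$), and let $t\in\{3,4\}$. Say that $r\in\mathcal{O}_D$ satisfies the $k$-star conditions if $\left(\frac{N(1-r),\,-N(a_1)}{2}\right)=-1$, $N(z)N(a_1)\in\mathbb{Q}_2^{*2}$ and $N(z)N(2^ta_1)^{-1}\in\mathbb{Z}_2$, where $z=a_1-ra_1\bar r$. Then there exists $r\in\mathcal{O}_D$ satisfying the $k$-star conditions if and only if there exists $\alpha=a+b\omega+ci+di\omega$ with $a,b,c,d\in\mathbb{Z}$, $0\le a,b,c,d<2^{t+3}$, satisfying them.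
   Context: $D=\left(\frac{2,5}{\mathbb{Q}_2}\right)$ is the quaternion division algebra over $\mathbb{Q}_2$ with basis $1,i,j,ij$, $i^2=2$, $j^2=5$, $ij=-ji$; $\omega=(1+j)/2$; $q\mapsto\bar q$ is the canonical involution and $N$ the reduced norm; $\mathcal{O}_D=\mathbb{Z}_2\oplus\mathbb{Z}_2\omega\oplus\mathbb{Z}_2i\oplus\mathbb{Z}_2i\omega$ is the maximal order. $\left(\frac{x,y}{2}\right)$ is the Hilbert symbol of $\mathbb{Q}_2$. *)

(* Defs.v *)
(* The field Q_2 of 2-adic numbers is not in the installed
   libraries, so we construct it honestly:
   - Z_2 = inverse limit of Z/2^n Z, represented by coherent integer sequences
     x with x (n+1) = x n mod 2^n; two sequences are equal as 2-adic integers
     iff x n = y n mod 2^n for all n  (relation [Z2eq]).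
   - Q_2 = Z_2[1/2], an element (k, x) representing x / 2^k; equality
     (k,x) ~ (l,y) iff 2^l x = 2^k y in Z_2 (relation [Q2eq]).
   All predicates below are stated up to these equivalences. *)
From mathcomp Require Import all_boot all_algebra.
From mathcomp Require Import ring.
Set Implicit Arguments. Unset Strict Implicit. Unset Printing Implicit Defensive.
Import GRing.Theory Num.Theory.
Local Open Scope ring_scope.

Record Z2 := MkZ2 {
  z2s : nat -> int;
  z2coh : forall n : nat, ((2 ^+ n : int) %| z2s n.+1 - z2s n)%Z }.

Definition Z2eq (x y : Z2) : Prop :=
  forall n : nat, ((2 ^+ n : int) %| z2s x n - z2s y n)%Z.

Lemma Z2const_coh (c : int) (n : nat) : ((2 ^+ n : int) %| c - c)%Z.
Proof. by rewrite subrr dvdz0. Qed.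
Definition Z2const (c : int) : Z2 := @MkZ2 (fun _ => c) (Z2const_coh c).

Lemma Z2add_coh (x y : Z2) (n : nat) :
  ((2 ^+ n : int) %| (z2s x n.+1 + z2s y n.+1) - (z2s x n + z2s y n))%Z.
Proof.
have -> : (z2s x n.+1 + z2s y n.+1) - (z2s x n + z2s y n)
        = (z2s x n.+1 - z2s x n) + (z2s y n.+1 - z2s y n) by ring.
by rewrite rpredD // z2coh.
Qed.
Definition Z2add (x y : Z2) : Z2 :=
  @MkZ2 (fun n => z2s x n + z2s y n) (Z2add_coh x y).

Lemma Z2opp_coh (x : Z2) (n : nat) :
  ((2 ^+ n : int) %| (- z2s x n.+1) - (- z2s x n))%Z.
Proof.
have -> : (- z2s x n.+1) - (- z2s x n) = - (z2s x n.+1 - z2s x n) by ring.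
by rewrite rpredN z2coh.
Qed.
Definition Z2opp (x : Z2) : Z2 := @MkZ2 (fun n => - z2s x n) (Z2opp_coh x).

Lemma Z2mul_coh (x y : Z2) (n : nat) :
  ((2 ^+ n : int) %| (z2s x n.+1 * z2s y n.+1) - (z2s x n * z2s y n))%Z.
Proof.
have -> : (z2s x n.+1 * z2s y n.+1) - (z2s x n * z2s y n)
        = z2s x n.+1 * (z2s y n.+1 - z2s y n) + (z2s x n.+1 - z2s x n) * z2s y n
  by ring.
by apply: rpredD; [apply: dvdz_mull | apply: dvdz_mulr]; exact: z2coh.
Qed.
Definition Z2mul (x y : Z2) : Z2 :=
  @MkZ2 (fun n => z2s x n * z2s y n) (Z2mul_coh x y).

Definition Z2unit (x : Z2) : Prop := exists v : Z2, Z2eq (Z2mul x v) (Z2const 1).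

Definition Q2 := (nat * Z2)%type.   (* (k, x) stands for x / 2^k *)

Definition Q2of (x : Z2) : Q2 := (0%N, x).
Definition Q2const (c : int) : Q2 := Q2of (Z2const c).

Definition Q2eq (p q : Q2) : Prop :=
  Z2eq (Z2mul (Z2const (2 ^+ q.1)) p.2) (Z2mul (Z2const (2 ^+ p.1)) q.2).

Definition Q2add (p q : Q2) : Q2 :=
  ((p.1 + q.1)%N, Z2add (Z2mul (Z2const (2 ^+ q.1)) p.2)
                        (Z2mul (Z2const (2 ^+ p.1)) q.2)).
Definition Q2opp (p : Q2) : Q2 := (p.1, Z2opp p.2).
Definition Q2sub (p q : Q2) : Q2 := Q2add p (Q2opp q).
Definition Q2mul (p q : Q2) : Q2 := ((p.1 + q.1)%N, Z2mul p.2 q.2).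

Definition Q2nz (p : Q2) : Prop := ~ Q2eq p (Q2const 0).

Definition Q2nzsq (p : Q2) : Prop :=
  Q2nz p /\ exists s : Q2, Q2eq p (Q2mul s s).

Definition hilbert_m1 (x y : Q2) : Prop :=
  ~ exists X Y Z : Q2, (Q2nz X \/ Q2nz Y \/ Q2nz Z) /\
      Q2eq (Q2mul Z Z) (Q2add (Q2mul x (Q2mul X X)) (Q2mul y (Q2mul Y Y))).

(* coordinates in the basis 1, i, j, ij *)
Definition quat := (Q2 * Q2 * Q2 * Q2)%type.
Definition q0 (x : quat) : Q2 := x.1.1.1.
Definition q1 (x : quat) : Q2 := x.1.1.2.
Definition q2 (x : quat) : Q2 := x.1.2.
Definition q3 (x : quat) : Q2 := x.2.
Definition mkq (a b c d : Q2) : quat := (a, b, c, d).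

Definition Qa : Q2 := Q2const 2.   (* i^2 *)
Definition Qb : Q2 := Q2const 5.   (* j^2 *)

Definition quat_mul (x y : quat) : quat :=
  let s := Q2add in let m := Q2mul in let d := Q2sub in
  mkq (d (s (s (m (q0 x) (q0 y)) (m Qa (m (q1 x) (q1 y))))
                (m Qb (m (q2 x) (q2 y))))
         (m (m Qa Qb) (m (q3 x) (q3 y))))
      (s (d (s (m (q0 x) (q1 y)) (m (q1 x) (q0 y)))
            (m Qb (m (q2 x) (q3 y))))
         (m Qb (m (q3 x) (q2 y))))
      (d (s (s (m (q0 x) (q2 y)) (m (q2 x) (q0 y)))
            (m Qa (m (q1 x) (q3 y))))
         (m Qa (m (q3 x) (q1 y))))
      (d (s (s (m (q0 x) (q3 y)) (m (q3 x) (q0 y))) (m (q1 x) (q2 y)))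
         (m (q2 x) (q1 y))).

Definition quat_sub (x y : quat) : quat :=
  mkq (Q2sub (q0 x) (q0 y)) (Q2sub (q1 x) (q1 y))
      (Q2sub (q2 x) (q2 y)) (Q2sub (q3 x) (q3 y)).

Definition quat_scale (c : Q2) (x : quat) : quat :=
  mkq (Q2mul c (q0 x)) (Q2mul c (q1 x)) (Q2mul c (q2 x)) (Q2mul c (q3 x)).

Definition quat_conj (x : quat) : quat :=
  mkq (q0 x) (Q2opp (q1 x)) (Q2opp (q2 x)) (Q2opp (q3 x)).

Definition quat_one : quat :=
  mkq (Q2const 1) (Q2const 0) (Q2const 0) (Q2const 0).

Definition qnorm (x : quat) : Q2 :=
  Q2add (Q2sub (Q2sub (Q2mul (q0 x) (q0 x)) (Q2mul Qa (Q2mul (q1 x) (q1 x))))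
               (Q2mul Qb (Q2mul (q2 x) (q2 x))))
        (Q2mul (Q2mul Qa Qb) (Q2mul (q3 x) (q3 x))).

Definition pure (x : quat) : Prop := Q2eq (q0 x) (Q2const 0).

(* the element  al + be*omega + ga*i + de*i*omega  of O_D, omega = (1+j)/2,
   i.e. (al + be/2) + (ga + de/2) i + (be/2) j + (de/2) ij *)
Definition half (x : Z2) : Q2 := (1%N, x).
Definition OD_elt (al be ga de : Z2) : quat :=
  mkq (half (Z2add (Z2mul (Z2const 2) al) be))
      (half (Z2add (Z2mul (Z2const 2) ga) de))
      (half be) (half de).

Definition div_in_Z2 (p q : Q2) : Prop :=
  Q2nz q /\ exists w : Z2, Q2eq p (Q2mul (Q2of w) q).

Definition nonminimal_defect_unit (u : Z2) : Prop :=
  exists s : Z2, Z2unit s /\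
    (Z2eq u (Z2opp (Z2mul s s)) \/
     Z2eq u (Z2opp (Z2mul (Z2const 5) (Z2mul s s)))).

Definition kstar (a1 : quat) (t : nat) (r : quat) : Prop :=
  let z := quat_sub a1 (quat_mul (quat_mul r a1) (quat_conj r)) in
  [/\ hilbert_m1 (qnorm (quat_sub quat_one r)) (Q2opp (qnorm a1)),
      Q2nzsq (Q2mul (qnorm z) (qnorm a1)) &
      div_in_Z2 (qnorm z) (qnorm (quat_scale (Q2const (2 ^+ t)) a1))].

(* Main.v *)
Require Import Defs.
From mathcomp Require Import all_boot all_algebra.
Import GRing.Theory Num.Theory.
Local Open Scope ring_scope.

From HB Require Import structures.
From mathcomp Require Import generic_quotient boolp.
From mathcomp Require Import ring zify.
Set Implicit Arguments. Unset Strict Implicit. Unset Printing Implicit Defensive.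

Local Open Scope quotient_scope.

HB.instance Definition _ := gen_eqMixin Z2.
HB.instance Definition _ := gen_choiceMixin Z2.

Notation dv n x := ((2 ^+ n : int) %| x)%Z.

Lemma dv_le (m n : nat) (x : int) : (m <= n)%N -> dv n x -> dv m x.
Proof. by move=> mn; apply: dvdz_trans; apply: dvdz_exp2l. Qed.

Lemma dv_sub (n : nat) (x y z : int) : dv n (x - y) -> dv n (y - z) -> dv n (x - z).
Proof. move=> h1 h2; have -> : x - z = (x - y) + (y - z) by ring. exact: rpredD. Qed.

Lemma Z2coh_le (x : Z2) (n m : nat) : (n <= m)%N -> dv n (z2s x m - z2s x n).
Proof.
elim: m => [|m IH]; first by rewrite leqn0 => /eqP ->; rewrite subrr dvdz0.
rewrite leq_eqVlt => /orP [/eqP ->|]; first by rewrite subrr dvdz0.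
rewrite ltnS => nm; apply: (dv_sub _ (IH nm)).
exact: (dv_le nm (z2coh x m)).
Qed.

Lemma Z2eq_refl x : Z2eq x x. Proof. by move=> n; rewrite subrr dvdz0. Qed.
Lemma Z2eq_sym x y : Z2eq x y -> Z2eq y x.
Proof. by move=> h n; rewrite -opprB rpredN. Qed.
Lemma Z2eq_trans x y z : Z2eq x y -> Z2eq y z -> Z2eq x z.
Proof. by move=> h1 h2 n; apply: dv_sub (h1 n) (h2 n). Qed.

Definition Z2eqb (x y : Z2) : bool := `[< Z2eq x y >].
Lemma Z2eqb_refl : reflexive Z2eqb. Proof. by move=> x; apply/asboolP/Z2eq_refl. Qed.
Lemma Z2eqb_sym : symmetric Z2eqb.
Proof. by move=> x y; apply/asboolP/asboolP; apply: Z2eq_sym. Qed.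
Lemma Z2eqb_trans : transitive Z2eqb.
Proof. by move=> y x z /asboolP h1 /asboolP h2; apply/asboolP; apply: Z2eq_trans h1 h2. Qed.
Canonical Z2eq_equiv := EquivRel Z2eqb Z2eqb_refl Z2eqb_sym Z2eqb_trans.

Definition ZZ := {eq_quot Z2eqb}.
HB.instance Definition _ := Choice.on ZZ.
Definition piZ (x : Z2) : ZZ := \pi_ZZ x.

Lemma piZP x y : piZ x = piZ y <-> Z2eq x y.
Proof. split; first by move/eqquotP/asboolP. by move=> h; apply/eqquotP/asboolP. Qed.
Lemma reprZ x : Z2eq (repr (piZ x)) x.
Proof. by apply/piZP; rewrite /piZ reprK. Qed.

Lemma Z2add_compat x x' y y' : Z2eq x x' -> Z2eq y y' -> Z2eq (Z2add x y) (Z2add x' y').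
Proof.
move=> h1 h2 n /=; have -> : z2s x n + z2s y n - (z2s x' n + z2s y' n)
  = (z2s x n - z2s x' n) + (z2s y n - z2s y' n) by ring.
exact: rpredD.
Qed.
Lemma Z2opp_compat x x' : Z2eq x x' -> Z2eq (Z2opp x) (Z2opp x').
Proof.
move=> h1 n /=; have -> : - z2s x n - - z2s x' n = - (z2s x n - z2s x' n) by ring.
by rewrite rpredN.
Qed.
Lemma Z2mul_compat x x' y y' : Z2eq x x' -> Z2eq y y' -> Z2eq (Z2mul x y) (Z2mul x' y').
Proof.
move=> h1 h2 n /=; have -> : z2s x n * z2s y n - z2s x' n * z2s y' n
  = z2s x n * (z2s y n - z2s y' n) + (z2s x n - z2s x' n) * z2s y' n by ring.
by apply: rpredD; [apply: dvdz_mull|apply: dvdz_mulr].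
Qed.

Definition ZZadd := locked (fun (x y : ZZ) => piZ (Z2add (repr x) (repr y))).
Definition ZZopp := locked (fun (x : ZZ) => piZ (Z2opp (repr x))).
Definition ZZmul := locked (fun (x y : ZZ) => piZ (Z2mul (repr x) (repr y))).
Definition ZZ0 : ZZ := piZ (Z2const 0).
Definition ZZ1 : ZZ := piZ (Z2const 1).

Lemma piZ_add x y : piZ (Z2add x y) = ZZadd (piZ x) (piZ y).
Proof. rewrite /ZZadd -lock; apply/piZP; apply: Z2add_compat; apply: Z2eq_sym; apply: reprZ. Qed.
Lemma piZ_opp x : piZ (Z2opp x) = ZZopp (piZ x).
Proof. rewrite /ZZopp -lock; apply/piZP; apply: Z2opp_compat; apply: Z2eq_sym; apply: reprZ. Qed.
Lemma piZ_mul x y : piZ (Z2mul x y) = ZZmul (piZ x) (piZ y).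
Proof. rewrite /ZZmul -lock; apply/piZP; apply: Z2mul_compat; apply: Z2eq_sym; apply: reprZ. Qed.

Lemma dv_eq n (a b : int) : a = b -> dv n (a - b).
Proof. by move=> ->; rewrite subrr dvdz0. Qed.
Ltac zzid := apply/piZP => ? /=; apply: dv_eq; ring.

Lemma ZZaddA : associative ZZadd.
Proof. by elim/(@quotW _ ZZ)=> x; elim/(@quotW _ ZZ)=> y; elim/(@quotW _ ZZ)=> z; rewrite -!piZ_add; zzid. Qed.
Lemma ZZaddC : commutative ZZadd.
Proof. by elim/(@quotW _ ZZ)=> x; elim/(@quotW _ ZZ)=> y; rewrite -!piZ_add; zzid. Qed.
Lemma ZZadd0 : left_id ZZ0 ZZadd.
Proof. by elim/(@quotW _ ZZ)=> x; rewrite -!piZ_add; zzid. Qed.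
Lemma ZZaddN : left_inverse ZZ0 ZZopp ZZadd.
Proof. by elim/(@quotW _ ZZ)=> x; rewrite -piZ_opp -!piZ_add; zzid. Qed.
HB.instance Definition _ := GRing.isZmodule.Build ZZ ZZaddA ZZaddC ZZadd0 ZZaddN.
Lemma ZZmulA : associative ZZmul.
Proof. by elim/(@quotW _ ZZ)=> x; elim/(@quotW _ ZZ)=> y; elim/(@quotW _ ZZ)=> z; rewrite -!piZ_mul; zzid. Qed.
Lemma ZZmulC : commutative ZZmul.
Proof. by elim/(@quotW _ ZZ)=> x; elim/(@quotW _ ZZ)=> y; rewrite -!piZ_mul; zzid. Qed.
Lemma ZZmul1 : left_id ZZ1 ZZmul.
Proof. by elim/(@quotW _ ZZ)=> x; rewrite -!piZ_mul; zzid. Qed.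
Lemma ZZmulD : left_distributive ZZmul ZZadd.
Proof. by elim/(@quotW _ ZZ)=> x; elim/(@quotW _ ZZ)=> y; elim/(@quotW _ ZZ)=> z; rewrite -!piZ_add -!piZ_mul -piZ_add; zzid. Qed.
Lemma ZZ10 : ZZ1 != ZZ0.
Proof. apply/eqP => /piZP /(_ 1%N) /=; by rewrite subr0 expr1. Qed.
HB.instance Definition _ := GRing.Zmodule_isComNzRing.Build ZZ ZZmulA ZZmulC ZZmul1 ZZmulD ZZ10.

Lemma piZ_addE x y : piZ (Z2add x y) = piZ x + piZ y. Proof. exact: piZ_add. Qed.
Lemma piZ_oppE x : piZ (Z2opp x) = - piZ x. Proof. exact: piZ_opp. Qed.
Lemma piZ_mulE x y : piZ (Z2mul x y) = piZ x * piZ y. Proof. exact: piZ_mul. Qed.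

Lemma piZ_constD a b : piZ (Z2const (a + b)) = piZ (Z2const a) + piZ (Z2const b).
Proof. by rewrite -piZ_addE; apply/piZP => n /=; apply: dv_eq. Qed.
Lemma piZ_constN a : piZ (Z2const (- a)) = - piZ (Z2const a).
Proof. by rewrite -piZ_oppE; apply/piZP => n /=; apply: dv_eq. Qed.
Lemma piZ_constM a b : piZ (Z2const (a * b)) = piZ (Z2const a) * piZ (Z2const b).
Proof. by rewrite -piZ_mulE; apply/piZP => n /=; apply: dv_eq. Qed.

Lemma piZ_const (c : int) : piZ (Z2const c) = c%:~R.
Proof.
have hn (n : nat) : piZ (Z2const n) = n%:R.
  elim: n => [|n IH]; first by [].
  by rewrite -addn1 PoszD piZ_constD IH natrD.
case: c => n; first exact: hn.
by rewrite NegzE piZ_constN hn.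
Qed.

Lemma piZ0 : piZ (Z2const 0) = 0. Proof. by rewrite piZ_const. Qed.
Lemma piZ1 : piZ (Z2const 1) = 1. Proof. by rewrite piZ_const. Qed.

Lemma piZ_surj (x : ZZ) : exists x' : Z2, x = piZ x'.
Proof. by exists (repr x); rewrite /piZ reprK. Qed.

Lemma Z2_approx (P : nat -> int -> Prop) :
  (forall n, exists c, P n c) ->
  (forall n c c', P n.+1 c -> P n c' -> dv n (c - c')) ->
  exists x : Z2, forall n, P n (z2s x n).
Proof.
move=> ex coh.
pose s n := projT1 (cid (ex n)).
have sP n : P n (s n) by rewrite /s; case: (cid (ex n)).
have cohs n : dv n (s n.+1 - s n) by apply: coh; apply: sP.
by exists (MkZ2 cohs).
Qed.

Lemma dv_cancel (n k : nat) (a : int) : dv (n + k) (2 ^+ k * a) -> dv n a.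
Proof. by rewrite exprD [2 ^+ n * _]mulrC dvdz_mul2l // expf_neq0. Qed.

Lemma pow2Z (k : nat) : (2 ^+ k : ZZ) = piZ (Z2const (2 ^+ k)).
Proof. by rewrite piZ_const rmorphXn. Qed.

Lemma ZZ_cancel2 (k : nat) (x : ZZ) : 2 ^+ k * x = 0 -> x = 0.
Proof.
case: (piZ_surj x) => x' ->.
rewrite pow2Z -piZ_mulE -piZ0 => /piZP h.
apply/piZP => n /=.
have := h (n + k)%N => /=; rewrite !subr0 => /dv_cancel H.
have := Z2coh_le x' (leq_addr k n) => H2.
have -> : z2s x' n = z2s x' (n + k)%N - (z2s x' (n + k)%N - z2s x' n) by ring.
by apply: rpredB.
Qed.

Lemma ZZ_inf_div (x : ZZ) : (forall k, exists y, x = 2 ^+ k * y) -> x = 0.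
Proof.
case: (piZ_surj x) => x' -> h; rewrite -piZ0; apply/piZP => n /=.
case: (h n) => y; case: (piZ_surj y) => y' ->.
rewrite pow2Z -piZ_mulE => /piZP /(_ n) /= H.
have -> : z2s x' n - 0 = (z2s x' n - 2 ^+ n * z2s y' n) + 2 ^+ n * z2s y' n by ring.
by apply: rpredD => //; apply: dvdz_mulr.
Qed.

Lemma ZZ_mod (x : ZZ) (k : nat) :
  exists (j : int) (y : ZZ), 0 <= j < 2 ^+ k /\ x = j%:~R + 2 ^+ k * y.
Proof.
case: (piZ_surj x) => x' ->.
pose j := (z2s x' k %% 2 ^+ k)%Z.
have p2 : (2 ^+ k : int) != 0 by rewrite expf_neq0.
have hj : forall m, (k <= m)%N -> dv k (z2s x' m - j).
  move=> m km.
  have -> : z2s x' m - j = (z2s x' m - z2s x' k) + (z2s x' k - j) by ring.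
  apply: rpredD; first exact: Z2coh_le.
  rewrite {1}(divz_eq (z2s x' k) (2 ^+ k)) /j.
  have -> : ((z2s x' k %/ 2 ^+ k)%Z * 2 ^+ k + (z2s x' k %% 2 ^+ k)%Z - (z2s x' k %% 2 ^+ k)%Z)
     = (z2s x' k %/ 2 ^+ k)%Z * 2 ^+ k by ring.
  exact: dvdz_mull.
have [y' Hy] : exists y' : Z2, forall n, dv (n + k) (z2s x' (n + k)%N - j - 2 ^+ k * z2s y' n).
  apply: (Z2_approx (P := fun n c => dv (n + k) (z2s x' (n + k)%N - j - 2 ^+ k * c))).
    move=> n; have /dvdzP [c Hc] := hj (n + k)%N (leq_addl n k).
    by exists c; rewrite Hc mulrC subrr dvdz0.
  move=> n c c' H1 H2; apply: (@dv_cancel n k).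
  have -> : 2 ^+ k * (c - c') = (z2s x' (n.+1 + k)%N - j - 2 ^+ k * c') - (z2s x' (n.+1 + k)%N - j - 2 ^+ k * c) by ring.
  apply: rpredB; last by apply: (dv_le _ H1); rewrite addSn.
  have -> : z2s x' (n.+1 + k)%N - j - 2 ^+ k * c' = (z2s x' (n.+1 + k)%N - z2s x' (n + k)%N) + (z2s x' (n + k)%N - j - 2 ^+ k * c') by ring.
  by apply: rpredD => //; apply: Z2coh_le; rewrite addSn.
exists j, (piZ y'); split; first by rewrite modz_ge0 // ltz_pmod // exprn_gt0.
rewrite pow2Z -piZ_const -piZ_mulE -piZ_addE; apply/piZP => n /=.
have -> : z2s x' n - (j + 2 ^+ k * z2s y' n) = (z2s x' n - z2s x' (n + k)%N) + (z2s x' (n + k)%N - j - 2 ^+ k * z2s y' n) by ring.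
apply: rpredD; first by rewrite -opprB rpredN; apply: Z2coh_le; apply: leq_addr.
by apply: (dv_le _ (Hy n)); apply: leq_addr.
Qed.

Lemma ZZ_int_dv (c : int) (k : nat) (y : ZZ) : (c%:~R : ZZ) = 2 ^+ k * y -> dv k c.
Proof.
case: (piZ_surj y) => y' ->.
rewrite pow2Z -piZ_const -piZ_mulE => /piZP /(_ k) /= H.
have -> : c = (c - 2 ^+ k * z2s y' k) + 2 ^+ k * z2s y' k by ring.
by apply: rpredD => //; apply: dvdz_mulr.
Qed.

Lemma odd_int (e : int) : (2 %| e)%Z || (2 %| e - 1)%Z.
Proof. lia. Qed.
Lemma dv0 (x : int) : dv 0 x. Proof. by rewrite expr0 dvd1z. Qed.

Lemma dv_mulD (m n : nat) (a b : int) : dv m a -> dv n b -> dv (m + n) (a * b).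
Proof. by move=> h1 h2; rewrite exprD; apply: dvdz_mul. Qed.

Lemma inv_mod (a : int) (n : nat) : dv 1 (a - 1) -> exists v, dv n (a * v - 1).
Proof.
move=> ha; elim: n => [|n [v Hv]]; first by exists 0; apply: dv0.
case: n Hv => [|n] Hv; first by exists 1; rewrite mulr1.
exists (v * (2 - a * v)).
have -> : a * (v * (2 - a * v)) - 1 = - ((a * v - 1) * (a * v - 1)) by ring.
rewrite rpredN; apply: (@dv_le _ (n.+1 + n.+1)); first by lia.
exact: dv_mulD.
Qed.

Lemma dv_odd_cancel (m : nat) (u o : int) : dv 1 (o - 1) -> dv m (u * o) -> dv m u.
Proof.
move=> ho h; case: (inv_mod m ho) => v Hv.
have -> : u = (u * o) * v - u * (o * v - 1) by ring.
by apply: rpredB; [apply: dvdz_mulr | apply: dvdz_mull].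
Qed.

Lemma sqrt_mod (c : int) (k : nat) : dv 3 (c - 1) -> (3 <= k)%N ->
  exists s, dv 2 (s - 1) /\ dv k (s * s - c).
Proof.
move=> hc; elim: k => [//|k IH]; rewrite leq_eqVlt => /orP [/eqP <-|].
  by exists 1; rewrite subrr dvdz0; split => //; rewrite mulr1 -opprB rpredN.
rewrite ltnS => hk; case: (IH hk) => s [hs1 hs2].
case: k hk hs2 {IH} => [|[|[|k]]] // _ hs2.
move/dvdzP: hs2 => [e He].
case/orP: (odd_int e) => /dvdzP [f Hf].
  exists s; split => //; rewrite He Hf.
  have -> : f * 2 * 2 ^+ k.+3 = f * 2 ^+ k.+4 :> int by rewrite [2 ^+ k.+4]exprS; ring.
  exact: dvdz_mull.
exists (s + 2 ^+ k.+2); split.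
  have -> : s + 2 ^+ k.+2 - 1 = (s - 1) + 2 ^+ 2 * 2 ^+ k by rewrite !exprS expr0; ring.
  by apply: rpredD => //; apply: dvdz_mulr.
move/dvdzP: hs1 => [g Hg].
have -> : (s + 2 ^+ k.+2) * (s + 2 ^+ k.+2) - c
  = (s * s - c) + 2 ^+ k.+3 * s + 2 ^+ k.+2 * 2 ^+ k.+2.
  by rewrite [2 ^+ k.+3]exprS; ring.
rewrite He.
have -> : s = g * 4 + 1 by rewrite -Hg; ring.
have -> : e = f * 2 + 1 by rewrite -Hf; ring.
have -> : 2 ^+ k.+2 * 2 ^+ k.+2 = 2 ^+ k.+4 * 2 ^+ k :> int by rewrite -!exprD; congr (_ ^+ _); lia.
have -> : (f * 2 + 1) * 2 ^+ k.+3 + 2 ^+ k.+3 * (g * 4 + 1) + 2 ^+ k.+4 * 2 ^+ k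
  = 2 ^+ k.+4 * (f + 2 * g + 1 + 2 ^+ k) by rewrite [2 ^+ k.+4]exprS; ring.
exact: dvdz_mulr.
Qed.

Lemma ZZ_hyp_eq (x y : ZZ) (c : int) (k : nat) : x = c%:~R + 2 ^+ k * y ->
  exists x' y' : Z2, x = piZ x' /\ forall n, dv n (z2s x' n - (c + 2 ^+ k * z2s y' n)).
Proof.
case: (piZ_surj x) => x' ->; case: (piZ_surj y) => y' ->.
rewrite pow2Z -piZ_const -piZ_mulE -piZ_addE => /piZP H.
by exists x', y'; split.
Qed.

Lemma ZZ_inv (x y : ZZ) : x = 1 + 2 * y -> exists v, x * v = 1.
Proof.
move=> h; have h' : x = (1 : int)%:~R + 2 ^+ 1 * y by rewrite h expr1.
case: (ZZ_hyp_eq h') => x' [y' [-> H]].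
have [v Hv] : exists v : Z2, forall n, dv n (z2s x' n * z2s v n - 1).
  apply: (Z2_approx (P := fun n c => dv n (z2s x' n * c - 1))).
    case=> [|n]; first by exists 0; apply: dv0.
    apply: inv_mod; have := dv_le (isT : (1 <= n.+1)%N) (H n.+1).
    have -> : z2s x' n.+1 - (1 + 2 ^+ 1 * z2s y' n.+1) = (z2s x' n.+1 - 1) - 2 ^+ 1 * z2s y' n.+1 by ring.
    by rewrite rpredBr // dvdz_mulr.
  move=> n c c' H1 H2.
  have -> : c - c' = - c * (z2s x' n * c' - 1) + c' * (z2s x' n.+1 * c - 1)
       - c * c' * (z2s x' n.+1 - z2s x' n) by ring.
  apply: rpredB; last by apply: dvdz_mull; apply: z2coh.
  apply: rpredD; first by apply: dvdz_mull.
  by apply: dvdz_mull; apply: (dv_le (leqnSn n)).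
exists (piZ v); rewrite -piZ_mulE -piZ1; apply/piZP => n /=; exact: Hv.
Qed.

Lemma ZZ_sqrt (x y : ZZ) : x = 1 + 8 * y -> exists r, x = r * r.
Proof.
move=> h; have h' : x = (1 : int)%:~R + 2 ^+ 3 * y by rewrite h -natrX.
case: (ZZ_hyp_eq h') => x' [y' [-> H]].
have [v Hv] : exists v : Z2, forall n, dv 2 (z2s v n - 1) /\ dv (n + 3) (z2s v n * z2s v n - z2s x' (n + 3)%N).
  apply: (Z2_approx (P := fun n s => dv 2 (s - 1) /\ dv (n + 3) (s * s - z2s x' (n + 3)%N))).
    move=> n; apply: sqrt_mod; last by rewrite leq_addl.
    have := dv_le (leq_addl n 3) (H (n + 3)%N).
    have -> : z2s x' (n + 3)%N - (1 + 2 ^+ 3 * z2s y' (n + 3)%N) = (z2s x' (n + 3)%N - 1) - 2 ^+ 3 * z2s y' (n + 3)%N by ring.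
    by rewrite rpredBr // dvdz_mulr.
  move=> n s s' [Hs1 Hs2] [Hs1' Hs2'].
  have : dv (n + 3) (s * s - s' * s').
    have -> : s * s - s' * s' = (s * s - z2s x' (n.+1 + 3)%N) + (z2s x' (n.+1 + 3)%N - z2s x' (n + 3)%N)
       - (s' * s' - z2s x' (n + 3)%N) by ring.
    apply: rpredB => //; apply: rpredD.
      by apply: (dv_le _ Hs2); rewrite addSn.
    by apply: Z2coh_le; rewrite addSn.
  have /dvdzP [q Hq] : dv 2 ((s - 1) + (s' - 1)) by apply: rpredD.
  have -> : s * s - s' * s' = 2 ^+ 1 * ((s - s') * (1 + 2 * q)).
    have -> : s' = q * 2 ^+ 2 - s + 2 by rewrite -Hq; ring.
    ring.
  rewrite (_ : (n + 3)%N = (n + 2) + 1)%N; last by lia.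
  move/dv_cancel/dv_odd_cancel => H3.
  apply: (@dv_le _ (n + 2)); first by lia.
  apply: H3; have -> : 1 + 2 * q - 1 = 2 ^+ 1 * q by ring.
  exact: dvdz_mulr.
exists (piZ v); rewrite -piZ_mulE; apply/piZP => n /=.
have -> : z2s x' n - z2s v n * z2s v n = (z2s x' n - z2s x' (n + 3)%N) - (z2s v n * z2s v n - z2s x' (n + 3)%N) by ring.
apply: rpredB.
  by rewrite -opprB rpredN; apply: Z2coh_le; apply: leq_addr.
by case: (Hv n) => _ /(dv_le (leq_addr 3 n)).
Qed.

Lemma ZZ_odd_neq (w y : ZZ) : 1 + 2 * w <> 2 * y.
Proof.
move=> h; have h2 : (1 : ZZ) = 2 ^+ 1 * (y - w). by rewrite expr1 mulrBr -h addrK.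
by have := ZZ_int_dv (c := 1) h2.
Qed.

Lemma ZZ_val (x : ZZ) : x != 0 -> exists (j : nat) (u w : ZZ), x = 2 ^+ j * u /\ u = 1 + 2 * w.
Proof.
move=> x0.
have ex : exists k, ~~ `[< exists y, x = 2 ^+ k * y >].
  apply: contrapT => hn; move/eqP: x0; apply; apply: ZZ_inf_div => k.
  apply: contrapT => hk; apply: hn; exists k; apply/negP => /asboolP; exact: hk.
case: (ex_minnP ex) => k /negP hk hmin.
case: k hk hmin => [|j] hk hmin.
  by case: hk; apply/asboolP; exists x; rewrite expr0 mul1r.
have /negPn /asboolP [u Hu] : ~~ ~~ `[< exists y, x = 2 ^+ j * y >].
  by apply/negP => /hmin; rewrite ltnn.
case: (ZZ_mod u 1) => c [w [hc Hw]].
have : (c == 0) || (c == 1) by lia.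
case/orP => /eqP Hc; last by exists j, u, w; split => //; rewrite Hw Hc expr1.
case: hk; apply/asboolP; exists w; rewrite Hu Hw Hc expr1 exprS; move: (2 ^+ j) => p; ring.
Qed.

Lemma ZZ_inv_ex (x : ZZ) : x != 0 -> exists jv : nat * ZZ, x * jv.2 = 2 ^+ jv.1.
Proof.
move=> /ZZ_val [j [u [w [Hx Hu]]]].
case: (ZZ_inv Hu) => v Hv.
by exists (j, v); rewrite /= Hx -mulrA Hv mulr1.
Qed.

Local Open Scope quotient_scope.

Definition FR := (nat * ZZ)%type.
Definition Feq (p q : FR) : bool := 2 ^+ q.1 * p.2 == 2 ^+ p.1 * q.2.

Lemma Feq_refl : reflexive Feq. Proof. by move=> p; rewrite /Feq. Qed.
Lemma Feq_sym : symmetric Feq. Proof. by move=> p q; rewrite /Feq eq_sym. Qed.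
Lemma Feq_trans : transitive Feq.
Proof.
move=> [l y] [k x] [m z]; rewrite /Feq /= => /eqP h1 /eqP h2; apply/eqP.
apply/eqP; rewrite -subr_eq0; apply/eqP; apply: (@ZZ_cancel2 l).
have -> : 2 ^+ l * (2 ^+ m * x - 2 ^+ k * z)
  = 2 ^+ m * (2 ^+ l * x - 2 ^+ k * y) + 2 ^+ k * (2 ^+ m * y - 2 ^+ l * z).
  move: (2 ^+ l) (2 ^+ m) (2 ^+ k) => a b c; ring.
by rewrite h1 h2 !subrr !mulr0 addr0.
Qed.
Canonical Feq_equiv := EquivRel Feq Feq_refl Feq_sym Feq_trans.

Definition F := {eq_quot Feq}.
HB.instance Definition _ := Choice.on F.
Definition piF (p : FR) : F := \pi_F p.

Lemma piFP p q : piF p = piF q <-> 2 ^+ q.1 * p.2 = 2 ^+ p.1 * q.2.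
Proof. split; first by move/eqquotP/eqP. by move=> h; apply/eqquotP/eqP. Qed.
Lemma piF_surj (x : F) : exists p, x = piF p.
Proof. by exists (repr x); rewrite /piF reprK. Qed.
Lemma reprF p : Feq (repr (piF p)) p.
Proof. by apply/eqP/piFP; rewrite /piF reprK. Qed.

Definition FRadd (p q : FR) : FR := ((p.1 + q.1)%N, 2 ^+ q.1 * p.2 + 2 ^+ p.1 * q.2).
Definition FRmul (p q : FR) : FR := ((p.1 + q.1)%N, p.2 * q.2).
Definition FRopp (p : FR) : FR := (p.1, - p.2).

Lemma FRadd_compat p p' q q' : Feq p p' -> Feq q q' -> Feq (FRadd p q) (FRadd p' q').
Proof.
case: p p' q q' => [k x] [k' x'] [l y] [l' y']; rewrite /Feq /= => /eqP h1 /eqP h2.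
apply/eqP; apply/eqP; rewrite -subr_eq0; apply/eqP; rewrite !exprD.
have -> : 2 ^+ k' * 2 ^+ l' * (2 ^+ l * x + 2 ^+ k * y) - 2 ^+ k * 2 ^+ l * (2 ^+ l' * x' + 2 ^+ k' * y')
  = 2 ^+ l' * 2 ^+ l * (2 ^+ k' * x - 2 ^+ k * x') + 2 ^+ k' * 2 ^+ k * (2 ^+ l' * y - 2 ^+ l * y').
  move: (2 ^+ k) (2 ^+ k') (2 ^+ l) (2 ^+ l') => a b c d; ring.
by rewrite h1 h2 !subrr !mulr0 addr0.
Qed.
Lemma FRmul_compat p p' q q' : Feq p p' -> Feq q q' -> Feq (FRmul p q) (FRmul p' q').
Proof.
case: p p' q q' => [k x] [k' x'] [l y] [l' y']; rewrite /Feq /= => /eqP h1 /eqP h2.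
apply/eqP; rewrite !exprD.
have -> : 2 ^+ k' * 2 ^+ l' * (x * y) = (2 ^+ k' * x) * (2 ^+ l' * y).
  move: (2 ^+ k') (2 ^+ l') => a b; ring.
rewrite h1 h2; move: (2 ^+ k) (2 ^+ l) => a b; ring.
Qed.
Lemma FRopp_compat p p' : Feq p p' -> Feq (FRopp p) (FRopp p').
Proof.
case: p p' => [k x] [k' x']; rewrite /Feq /= => /eqP h1.
by apply/eqP; rewrite !mulrN h1.
Qed.

Definition Fadd := locked (fun x y : F => piF (FRadd (repr x) (repr y))).
Definition Fmul := locked (fun x y : F => piF (FRmul (repr x) (repr y))).
Definition Fopp := locked (fun x : F => piF (FRopp (repr x))).
Definition F0 : F := piF (0%N, 0).
Definition F1 : F := piF (0%N, 1).

Lemma Feq_piF p q : Feq p q -> piF p = piF q. Proof. by move=> h; apply/eqquotP. Qed.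

Lemma piF_add p q : piF (FRadd p q) = Fadd (piF p) (piF q).
Proof. by rewrite /Fadd -lock; apply: Feq_piF; apply: FRadd_compat; rewrite Feq_sym reprF. Qed.
Lemma piF_mul p q : piF (FRmul p q) = Fmul (piF p) (piF q).
Proof. by rewrite /Fmul -lock; apply: Feq_piF; apply: FRmul_compat; rewrite Feq_sym reprF. Qed.
Lemma piF_opp p : piF (FRopp p) = Fopp (piF p).
Proof. by rewrite /Fopp -lock; apply: Feq_piF; apply: FRopp_compat; rewrite Feq_sym reprF. Qed.

Ltac fid := apply/piFP => /=; rewrite ?exprD ?expr0;
  repeat match goal with |- context [2 ^+ ?k] => is_var k; move: (2 ^+ k) => ? end; ring.

Lemma FaddA : associative Fadd.
Proof. by elim/(@quotW _ F)=> [[a x]]; elim/(@quotW _ F)=> [[b y]]; elim/(@quotW _ F)=> [[c z]]; rewrite -!piF_add; fid. Qed.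
Lemma FaddC : commutative Fadd.
Proof. by elim/(@quotW _ F)=> [[a x]]; elim/(@quotW _ F)=> [[b y]]; rewrite -!piF_add; fid. Qed.
Lemma Fadd0 : left_id F0 Fadd.
Proof. by elim/(@quotW _ F)=> [[a x]]; rewrite -!piF_add; fid. Qed.
Lemma FaddN : left_inverse F0 Fopp Fadd.
Proof. by elim/(@quotW _ F)=> [[a x]]; rewrite -piF_opp -!piF_add; fid. Qed.
HB.instance Definition _ := GRing.isZmodule.Build F FaddA FaddC Fadd0 FaddN.
Lemma FmulA : associative Fmul.
Proof. by elim/(@quotW _ F)=> [[a x]]; elim/(@quotW _ F)=> [[b y]]; elim/(@quotW _ F)=> [[c z]]; rewrite -!piF_mul; fid. Qed.
Lemma FmulC : commutative Fmul.
Proof. by elim/(@quotW _ F)=> [[a x]]; elim/(@quotW _ F)=> [[b y]]; rewrite -!piF_mul; fid. Qed.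
Lemma Fmul1 : left_id F1 Fmul.
Proof. by elim/(@quotW _ F)=> [[a x]]; rewrite -!piF_mul; fid. Qed.
Lemma FmulD : left_distributive Fmul Fadd.
Proof. by elim/(@quotW _ F)=> [[a x]]; elim/(@quotW _ F)=> [[b y]]; elim/(@quotW _ F)=> [[c z]]; rewrite -!piF_add -!piF_mul -piF_add; fid. Qed.
Lemma F10 : F1 != F0.
Proof. by apply/eqP => /piFP /= /eqP; rewrite expr0 !mul1r oner_eq0. Qed.
HB.instance Definition _ := GRing.Zmodule_isComNzRing.Build F FmulA FmulC Fmul1 FmulD F10.

Definition invjv (x : ZZ) : nat * ZZ :=
  if pselect (x != 0) is left h then projT1 (cid (ZZ_inv_ex h)) else (0%N, 0).
Lemma invjvP (x : ZZ) : x != 0 -> x * (invjv x).2 = 2 ^+ (invjv x).1.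
Proof. by move=> h; rewrite /invjv; case: pselect => // h'; case: cid. Qed.

Definition FRinv (p : FR) : FR := ((invjv p.2).1, 2 ^+ p.1 * (invjv p.2).2).
Definition Finv (x : F) : F := if x == 0 then 0 else piF (FRinv (repr x)).

Lemma piF0 k : piF (k, 0) = 0.
Proof. by apply/piFP => /=; rewrite !mulr0. Qed.

Lemma FmulVf (x : F) : x != 0 -> Finv x * x = 1.
Proof.
rewrite /Finv => xn0; rewrite (negPf xn0).
have ex : x = piF (repr x) by rewrite /piF reprK.
move: (repr x) ex => p ep; rewrite ep in xn0 *.
case: p {ep} xn0 => k y xn0.
have yn0 : y != 0 by apply: contraNneq xn0 => ->; rewrite piF0.
rewrite /FRinv /=.
move: (invjvP yn0); case: (invjv y) => j v /= hv.
rewrite -[_ * _]piF_mul; apply/piFP => /=.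
rewrite -mulrA [v * y]mulrC hv mulr1 expr0 mul1r exprD mulrC.
done.
Qed.

Lemma Finv0 : Finv 0 = 0.
Proof. by rewrite /Finv eqxx. Qed.
HB.instance Definition _ := GRing.ComNzRing_isField.Build F FmulVf Finv0.

Definition Fof (x : ZZ) : F := piF (0%N, x).
Lemma Fof_add x y : Fof (x + y) = Fof x + Fof y.
Proof. by rewrite /Fof -[piF _ + piF _]piF_add; apply/piFP => /=; rewrite !expr0 !mul1r. Qed.
Lemma Fof_mul x y : Fof (x * y) = Fof x * Fof y.
Proof. by rewrite /Fof -[piF _ * piF _]piF_mul; apply/piFP => /=; rewrite !expr0 !mul1r. Qed.
Lemma Fof_opp x : Fof (- x) = - Fof x.
Proof. by rewrite /Fof -[- piF _]piF_opp; apply/piFP. Qed.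
Lemma Fof1 : Fof 1 = 1. Proof. by []. Qed.
Lemma Fof0 : Fof 0 = 0. Proof. by []. Qed.
Lemma Fof_sub x y : Fof (x - y) = Fof x - Fof y.
Proof. by rewrite Fof_add Fof_opp. Qed.
Lemma Fof_inj x y : Fof x = Fof y -> x = y.
Proof. by move/piFP => /=; rewrite !expr0 !mul1r. Qed.
Lemma Fof_nat (n : nat) : Fof n%:R = n%:R.
Proof. by elim: n => [|n IH]; rewrite ?Fof0 // -addn1 !natrD Fof_add IH Fof1. Qed.
Lemma Fof_int (c : int) : Fof c%:~R = c%:~R.
Proof. by case: c => n; rewrite ?NegzE ?rmorphN /= ?Fof_opp Fof_nat. Qed.
Lemma Fof_exp x k : Fof (x ^+ k) = Fof x ^+ k.
Proof. by elim: k => [|k IH]; rewrite ?expr0 ?Fof1 // !exprS Fof_mul IH. Qed.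

Lemma ZZ2_neq0 : (2 : ZZ) != 0.
Proof.
apply/eqP => h; have h2 : ((2 : int)%:~R : ZZ) = 2 ^+ 2 * 0 by rewrite mulr0.
by have := ZZ_int_dv h2.
Qed.
Lemma F2_neq0 : (2 : F) != 0.
Proof.
apply/eqP => h; move: ZZ2_neq0; rewrite -(inj_eq Fof_inj) (Fof_nat 2) h Fof0.
by rewrite eqxx.
Qed.

Lemma piF_div k x : piF (k, x) = Fof x / 2 ^+ k.
Proof.
apply: (canRL (mulfK _)); first by rewrite expf_neq0 // F2_neq0.
have -> : (2 ^+ k : F) = Fof (2 ^+ k) by rewrite Fof_exp (Fof_nat 2).
rewrite -[_ * _]piF_mul; apply/piFP => /=; rewrite expr0 mul1r addn0 mulrC.
done.
Qed.

Lemma F_surj (x : F) : exists k y, x = Fof y / 2 ^+ k.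
Proof. by case: (piF_surj x) => [[k y]] ->; exists k, y; rewrite piF_div. Qed.

Definition emb (p : Q2) : F := piF (p.1, piZ p.2).

Lemma emb_eq p q : Q2eq p q <-> emb p = emb q.
Proof.
rewrite /emb; split.
  move/piZP; rewrite !piZ_mulE !piZ_const !rmorphXn /= => h.
  by apply/piFP.
move/piFP => /= h; apply/piZP; rewrite !piZ_mulE !piZ_const !rmorphXn /=.
exact: h.
Qed.

Lemma emb_add p q : emb (Q2add p q) = emb p + emb q.
Proof.
rewrite /emb /Q2add /= -[piF _ + piF _]piF_add /FRadd /=.
by rewrite piZ_addE !piZ_mulE !piZ_const !rmorphXn.
Qed.
Lemma emb_mul p q : emb (Q2mul p q) = emb p * emb q.
Proof. by rewrite /emb /Q2mul /= -[piF _ * piF _]piF_mul /FRmul /= piZ_mulE. Qed.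
Lemma emb_opp p : emb (Q2opp p) = - emb p.
Proof. by rewrite /emb /Q2opp /= -[- piF _]piF_opp /FRopp /= piZ_oppE. Qed.
Lemma emb_sub p q : emb (Q2sub p q) = emb p - emb q.
Proof. by rewrite /Q2sub emb_add emb_opp. Qed.
Lemma emb_of z : emb (Q2of z) = Fof (piZ z).
Proof. by []. Qed.
Lemma Fof_piZconst c : Fof (piZ (Z2const c)) = c%:~R.
Proof. by rewrite piZ_const Fof_int. Qed.
Lemma emb_const c : emb (Q2const c) = c%:~R.
Proof. by rewrite /Q2const emb_of Fof_piZconst. Qed.
Lemma emb_half z : emb (Defs.half z) = Fof (piZ z) / 2.
Proof. by rewrite /emb /Defs.half /= piF_div expr1. Qed.
Lemma emb_surj (x : F) : exists p, emb p = x.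
Proof.
case: (F_surj x) => k [y ->]; case: (piZ_surj y) => y' ->.
by exists (k, y'); rewrite /emb /= piF_div.
Qed.

Definition isZ (x : F) : Prop := exists y : ZZ, x = Fof y.

Lemma Fof2k k : Fof (2 ^+ k) = 2 ^+ k.
Proof. by rewrite Fof_exp (Fof_nat 2). Qed.

Lemma isZ_int (c : int) : isZ c%:~R. Proof. by exists c%:~R; rewrite Fof_int. Qed.
Lemma isZ_add x y : isZ x -> isZ y -> isZ (x + y).
Proof. by move=> [a ->] [b ->]; exists (a + b); rewrite Fof_add. Qed.
Lemma isZ_mul x y : isZ x -> isZ y -> isZ (x * y).
Proof. by move=> [a ->] [b ->]; exists (a * b); rewrite Fof_mul. Qed.
Lemma isZ_opp x : isZ x -> isZ (- x).
Proof. by move=> [a ->]; exists (- a); rewrite Fof_opp. Qed.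
Lemma isZ_sub x y : isZ x -> isZ y -> isZ (x - y).
Proof. by move=> hx hy; apply: isZ_add => //; apply: isZ_opp. Qed.
Lemma isZ_nat (n : nat) : isZ n%:R. Proof. by exists n%:R; rewrite Fof_nat. Qed.
Lemma isZ0 : isZ 0. Proof. exact: (isZ_nat 0). Qed.
Lemma isZ1 : isZ 1. Proof. exact: (isZ_nat 1). Qed.
Lemma isZ_exp x k : isZ x -> isZ (x ^+ k).
Proof. by move=> [a ->]; exists (a ^+ k); rewrite Fof_exp. Qed.

Lemma F_mod (x : F) (k : nat) : isZ x ->
  exists (j : int) (y : F), [/\ 0 <= j < 2 ^+ k, isZ y & x = j%:~R + 2 ^+ k * y].
Proof.
move=> [a ->]; case: (ZZ_mod a k) => j [y [hj ->]].
by exists j, (Fof y); split => //; [exists y | rewrite Fof_add Fof_mul Fof_int Fof2k].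
Qed.

Lemma F_sqrt (x y : F) : isZ y -> x = 1 + 8 * y -> exists r, x = r * r.
Proof.
move=> [b ->] ->.
have [r hr] := ZZ_sqrt (erefl (1 + 8 * b)).
by exists (Fof r); rewrite -Fof_mul -hr Fof_add Fof_mul Fof1 (Fof_nat 8).
Qed.

Lemma F_inv_odd (x y : F) : isZ y -> x = 1 + 2 * y -> exists v, isZ v /\ x * v = 1.
Proof.
move=> [b ->] ->.
have [v hv] := ZZ_inv (erefl (1 + 2 * b)).
exists (Fof v); split; first by exists v.
by rewrite -(Fof_nat 2) -Fof1 -Fof_mul -Fof_add -Fof_mul hv.
Qed.

Lemma F_odd_neq (w y : F) : isZ w -> isZ y -> 1 + 2 * w <> 2 * y.
Proof.
move=> [a ->] [b ->]; rewrite -(Fof_nat 2) -Fof1 -!Fof_mul -Fof_add => /Fof_inj.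
exact: ZZ_odd_neq.
Qed.

Lemma F_int_dv (c : int) (k : nat) (y : F) : isZ y -> (c%:~R : F) = 2 ^+ k * y -> dv k c.
Proof.
move=> [b ->]; rewrite -Fof_int -Fof2k -Fof_mul => /Fof_inj.
exact: ZZ_int_dv.
Qed.

Lemma F_cancel2 k (x : F) : 2 ^+ k * x = 0 -> x = 0.
Proof. by move/eqP; rewrite mulf_eq0 expf_eq0 (negPf F2_neq0) andbF /= => /eqP. Qed.

Lemma ZZ_sq_div (k : nat) (y w : ZZ) : y * y = 2 ^+ (2 * k) * w -> exists y', y = 2 ^+ k * y'.
Proof.
elim: k y w => [|k IH] y w h; first by exists y; rewrite expr0 mul1r.
case: (ZZ_mod y 1) => c [v [hc hy]].
have : (c == 0) || (c == 1) by lia.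
case/orP => /eqP hc'; rewrite hc' ?mulr0z ?mulr1z in hy.
  have hv : v * v = 2 ^+ (2 * k) * w.
    apply/eqP; rewrite -subr_eq0; apply/eqP; apply: (@ZZ_cancel2 2).
    have e : (2 * k.+1 = 2 + 2 * k)%N by lia.
    move: h; rewrite hy e exprD add0r expr1 => h.
    rewrite mulrBr [2 ^+ 2 * (_ * w)]mulrA -h; rewrite expr2; ring.
  case: (IH v w hv) => y' hy'; exists y'; rewrite hy hy' add0r expr1 exprS; move: (2 ^+ k) => p; ring.
exfalso; move: h; rewrite hy expr1.
have e : (2 * k.+1 = 1 + (2 * k + 1))%N by lia.
rewrite e exprD expr1 -mulrA => h.
apply: (@ZZ_odd_neq (2 * v + 2 * v * v) (2 ^+ (2 * k + 1) * w)); rewrite -h; ring.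
Qed.

Lemma F_sq_int_aux (K : fieldType) (a p : K) : p != 0 -> a * a = (a / p * (a / p)) * (p * p).
Proof. by move=> hp; rewrite mulrACA !divfK. Qed.

Lemma F_sq_int (x : F) : isZ (x * x) -> isZ x.
Proof.
case: (F_surj x) => k [y ->] [w hw].
have hk : (2 : F) ^+ k != 0 by rewrite expf_neq0 // F2_neq0.
have e2 : (2 : F) ^+ (2 * k) = 2 ^+ k * 2 ^+ k by rewrite mul2n -addnn exprD.
have : y * y = 2 ^+ (2 * k) * w.
  apply: Fof_inj; rewrite Fof_mul Fof_mul Fof2k -hw e2.
  by rewrite {1}(F_sq_int_aux (Fof y) hk) mulrC.
case/ZZ_sq_div => y' ->; exists y'; rewrite Fof_mul Fof2k.
by rewrite [2 ^+ k * _]mulrC mulfK.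
Qed.

Definition chk : bool := all (fun n0 : nat => all (fun n1 : nat => all (fun n2 : nat => all (fun n3 : nat =>
  (((n0 * n0 + 10 * (n3 * n3)) %% 16)%N == ((2 * (n1 * n1) + 5 * (n2 * n2)) %% 16)%N) ==> [&& ~~ odd n0, ~~ odd n1, ~~ odd n2 & ~~ odd n3])
  (iota 0 8)) (iota 0 8)) (iota 0 8)) (iota 0 8).
Lemma chkT : chk. Proof. by vm_compute. Qed.

Lemma chk_use (n0 n1 n2 n3 : nat) : (n0 < 8)%N -> (n1 < 8)%N -> (n2 < 8)%N -> (n3 < 8)%N ->
  ((n0 * n0 + 10 * (n3 * n3)) %% 16 = (2 * (n1 * n1) + 5 * (n2 * n2)) %% 16)%N ->
  [&& ~~ odd n0, ~~ odd n1, ~~ odd n2 & ~~ odd n3].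
Proof.
move=> h0 h1 h2 h3 he.
have := chkT; rewrite /chk => /allP /(_ n0); rewrite mem_iota h0 => /(_ isT).
move=> /allP /(_ n1); rewrite mem_iota h1 => /(_ isT).
move=> /allP /(_ n2); rewrite mem_iota h2 => /(_ isT).
move=> /allP /(_ n3); rewrite mem_iota h3 => /(_ isT).
by rewrite he eqxx.
Qed.

Definition Qf (R : comRingType) (x0 x1 x2 x3 : R) := x0 * x0 - 2 * (x1 * x1) - 5 * (x2 * x2) + 10 * (x3 * x3).

Lemma ZZ_even_of (z : ZZ) : (exists (n : nat) (w : ZZ), ~~ odd n /\ z = (n%:R : ZZ) + 2 ^+ 3 * w) -> exists v, z = 2 * v.
Proof.
case=> n [w [hn ->]]; exists ((n./2)%:R + 4 * w).
have hn2 : n = (n./2 + n./2)%N by rewrite addnn (even_halfK hn).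
rewrite {1}hn2 natrD; move: (n./2)%:R => p; rewrite !exprS expr0; ring.
Qed.

Lemma ZZ_Q_even (z0 z1 z2 z3 : ZZ) : Qf z0 z1 z2 z3 = 0 ->
  [/\ exists v, z0 = 2 * v, exists v, z1 = 2 * v, exists v, z2 = 2 * v & exists v, z3 = 2 * v].
Proof.
case: (ZZ_mod z0 3) => j0 [w0 [h0 e0]].
case: (ZZ_mod z1 3) => j1 [w1 [h1 e1]].
case: (ZZ_mod z2 3) => j2 [w2 [h2 e2]].
case: (ZZ_mod z3 3) => j3 [w3 [h3 e3]].
case: j0 h0 e0 => [n0|//] h0 e0; case: j1 h1 e1 => [n1|//] h1 e1.
case: j2 h2 e2 => [n2|//] h2 e2; case: j3 h3 e3 => [n3|//] h3 e3.
rewrite /Qf e0 e1 e2 e3 => hQ.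
pose J : int := (n0 * n0 + 10 * (n3 * n3))%N%:Z - (2 * (n1 * n1) + 5 * (n2 * n2))%N%:Z.
pose R := (n0%:R * w0 + 4 * (w0 * w0)) - 2 * (n1%:R * w1 + 4 * (w1 * w1))
   - 5 * (n2%:R * w2 + 4 * (w2 * w2)) + 10 * (n3%:R * w3 + 4 * (w3 * w3)) : ZZ.
have hJ : (J%:~R : ZZ) = 2 ^+ 4 * (- R).
  have hc : forall n : nat, ((n : int)%:~R : ZZ) = n%:R by [].
  apply/eqP; rewrite -subr_eq0; apply/eqP; rewrite -[RHS]hQ.
  rewrite /J intrB !hc !natrD !natrM /R.
  move: (n0%:R : ZZ) (n1%:R : ZZ) (n2%:R : ZZ) (n3%:R : ZZ) => a b c d.
  rewrite !exprS expr0; ring.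
have := ZZ_int_dv hJ; rewrite /J => hd.
have hm : ((n0 * n0 + 10 * (n3 * n3)) %% 16 = (2 * (n1 * n1) + 5 * (n2 * n2)) %% 16)%N.
  move: hd; rewrite (_ : (2 ^+ 4 : int) = 16) //; lia.
have := chk_use _ _ _ _ hm; rewrite -!(ltz_nat _ 8).
move=> /(_ (proj2 (andP h0)) (proj2 (andP h1)) (proj2 (andP h2)) (proj2 (andP h3))) /and4P [o0 o1 o2 o3].
by split; apply: ZZ_even_of; [exists n0, w0| exists n1, w1 | exists n2, w2 | exists n3, w3].
Qed.

Lemma ZZ_aniso (y0 y1 y2 y3 : ZZ) : Qf y0 y1 y2 y3 = 0 -> [/\ y0 = 0, y1 = 0, y2 = 0 & y3 = 0].
Proof.
move=> hQ.
have key : forall k, exists v0 v1 v2 v3 : ZZ, [/\ Qf v0 v1 v2 v3 = 0,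
   y0 = 2 ^+ k * v0, y1 = 2 ^+ k * v1, y2 = 2 ^+ k * v2 & y3 = 2 ^+ k * v3].
  elim=> [|k [v0 [v1 [v2 [v3 [hv e0 e1 e2 e3]]]]]].
    by exists y0, y1, y2, y3; rewrite expr0 !mul1r.
  case: (ZZ_Q_even hv) => [[u0 f0] [u1 f1] [u2 f2] [u3 f3]].
  exists u0, u1, u2, u3; split.
  - apply: (@ZZ_cancel2 2); move: hv; rewrite /Qf f0 f1 f2 f3 => <-.
    rewrite expr2; ring.
  - by rewrite e0 f0 exprS mulrA [_ * 2]mulrC.
  - by rewrite e1 f1 exprS mulrA [_ * 2]mulrC.
  - by rewrite e2 f2 exprS mulrA [_ * 2]mulrC.
  - by rewrite e3 f3 exprS mulrA [_ * 2]mulrC.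
split; apply: ZZ_inf_div => k; case: (key k) => v0 [v1 [v2 [v3 [_ e0 e1 e2 e3]]]].
- by exists v0. - by exists v1. - by exists v2. - by exists v3.
Qed.

Lemma F_scale_int (x : F) : exists k, isZ (2 ^+ k * x).
Proof.
case: (F_surj x) => k [y ->]; exists k; exists y.
by rewrite mulrC divfK // expf_neq0 // F2_neq0.
Qed.

Lemma isZ_scale (k l : nat) (x : F) : isZ (2 ^+ k * x) -> isZ (2 ^+ (l + k) * x).
Proof. by move=> h; rewrite exprD -mulrA; apply: isZ_mul => //; apply: isZ_exp; apply: (isZ_nat 2). Qed.

Lemma F_aniso (x0 x1 x2 x3 : F) : Qf x0 x1 x2 x3 = 0 -> [/\ x0 = 0, x1 = 0, x2 = 0 & x3 = 0].
Proof.
move=> hQ.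
case: (F_scale_int x0) => k0 h0; case: (F_scale_int x1) => k1 h1.
case: (F_scale_int x2) => k2 h2; case: (F_scale_int x3) => k3 h3.
pose K := (k0 + k1 + k2 + k3)%N.
have g0 : isZ (2 ^+ K * x0) by rewrite (_ : K = (k1 + k2 + k3) + k0)%N; [apply: isZ_scale | rewrite /K; lia].
have g1 : isZ (2 ^+ K * x1) by rewrite (_ : K = (k0 + k2 + k3) + k1)%N; [apply: isZ_scale | rewrite /K; lia].
have g2 : isZ (2 ^+ K * x2) by rewrite (_ : K = (k0 + k1 + k3) + k2)%N; [apply: isZ_scale | rewrite /K; lia].
have g3 : isZ (2 ^+ K * x3) by rewrite (_ : K = (k0 + k1 + k2) + k3)%N; [apply: isZ_scale | rewrite /K; lia].
case: g0 => y0 e0; case: g1 => y1 e1; case: g2 => y2 e2; case: g3 => y3 e3.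
have hy : Qf y0 y1 y2 y3 = 0.
  apply: Fof_inj; rewrite Fof0.
  have -> : Fof (Qf y0 y1 y2 y3) = Qf (Fof y0) (Fof y1) (Fof y2) (Fof y3).
    by rewrite /Qf !Fof_add !Fof_opp !Fof_mul !(Fof_nat 2) !(Fof_nat 5) !(Fof_nat 10).
  rewrite -e0 -e1 -e2 -e3.
  have -> : Qf (2 ^+ K * x0) (2 ^+ K * x1) (2 ^+ K * x2) (2 ^+ K * x3) = (2 ^+ K * 2 ^+ K) * Qf x0 x1 x2 x3.
    rewrite /Qf; move: (2 ^+ K : F) => p; ring.
  by rewrite hQ mulr0.
have hK : (2 : F) ^+ K != 0 by rewrite expf_neq0 // F2_neq0.
case: (ZZ_aniso hy) => z0 z1 z2 z3.
split; apply: (@F_cancel2 K).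
- by rewrite e0 z0 Fof0. - by rewrite e1 z1 Fof0. - by rewrite e2 z2 Fof0. - by rewrite e3 z3 Fof0.
Qed.

Section Quat.
Variable R : comRingType.
Record FQ := mkFQ { c0 : R; c1 : R; c2 : R; c3 : R }.

Definition qmul (x y : FQ) : FQ :=
  mkFQ (c0 x * c0 y + 2 * (c1 x * c1 y) + 5 * (c2 x * c2 y) - 10 * (c3 x * c3 y))
       (c0 x * c1 y + c1 x * c0 y - 5 * (c2 x * c3 y) + 5 * (c3 x * c2 y))
       (c0 x * c2 y + c2 x * c0 y + 2 * (c1 x * c3 y) - 2 * (c3 x * c1 y))
       (c0 x * c3 y + c3 x * c0 y + c1 x * c2 y - c2 x * c1 y).
Definition qN (x : FQ) : R := c0 x * c0 x - 2 * (c1 x * c1 x) - 5 * (c2 x * c2 x) + 10 * (c3 x * c3 x).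
Definition qconj (x : FQ) : FQ := mkFQ (c0 x) (- c1 x) (- c2 x) (- c3 x).
Definition qsub (x y : FQ) : FQ := mkFQ (c0 x - c0 y) (c1 x - c1 y) (c2 x - c2 y) (c3 x - c3 y).
Definition qadd (x y : FQ) : FQ := mkFQ (c0 x + c0 y) (c1 x + c1 y) (c2 x + c2 y) (c3 x + c3 y).
Definition qsc (c : R) (x : FQ) : FQ := mkFQ (c * c0 x) (c * c1 x) (c * c2 x) (c * c3 x).
Definition qone : FQ := mkFQ 1 0 0 0.
Definition qB (h a : FQ) : R := - 2 * (c1 h * c1 a) - 5 * (c2 h * c2 a) + 10 * (c3 h * c3 a).

Lemma qN_mul x y : qN (qmul x y) = qN x * qN y.
Proof. case: x y => [x0 x1 x2 x3] [y0 y1 y2 y3]; rewrite /qN /qmul /=; ring. Qed.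

Lemma qmulA x y z : qmul x (qmul y z) = qmul (qmul x y) z.
Proof. case: x y z => [x0 x1 x2 x3] [y0 y1 y2 y3] [z0 z1 z2 z3]; rewrite /qmul /=; congr mkFQ; ring. Qed.

Lemma qN_conj x : qN (qconj x) = qN x.
Proof. case: x => [x0 x1 x2 x3]; rewrite /qN /=; ring. Qed.

Section Pure.
Variables (a1 a2 a3 : R).
Let a := mkFQ 0 a1 a2 a3.
Let m := qN a.

Lemma I1 r : qN (qadd (qsc m r) (qmul (qmul a r) a))
  = m * qN (qsub a (qmul (qmul r a) (qconj r))) - m * m * ((qN r - 1) * (qN r - 1)).
Proof. case: r => [r0 r1 r2 r3]; rewrite /m /a /qN /qadd /qsc /qmul /qsub /qconj /=; ring. Qed.

Lemma I2 r : qN (qsub (qsc m r) (qmul (qmul a r) a))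
  = m * m * ((1 + qN r) * (1 + qN r)) - m * qN (qsub a (qmul (qmul r a) (qconj r))).
Proof. case: r => [r0 r1 r2 r3]; rewrite /m /a /qN /qadd /qsc /qmul /qsub /qconj /=; ring. Qed.

Lemma Epure r : c0 (qadd (qsc m r) (qmul (qmul a r) a)) = 0.
Proof. case: r => [r0 r1 r2 r3]; rewrite /m /a /qN /qadd /qsc /qmul /=; ring. Qed.

Lemma EB r : qB (qadd (qsc m r) (qmul (qmul a r) a)) a = 0.
Proof. case: r => [r0 r1 r2 r3]; rewrite /qB /m /a /qN /qadd /qsc /qmul /=; ring. Qed.

Lemma Xcomm r : qmul (qsub (qsc m r) (qmul (qmul a r) a)) a = qmul a (qsub (qsc m r) (qmul (qmul a r) a)).
Proof. case: r => [r0 r1 r2 r3]; rewrite /m /a /qN /qsub /qsc /qmul /=; congr mkFQ; ring. Qed.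

Lemma Xre r : c0 (qsub (qsc m r) (qmul (qmul a r) a)) = 2 * m * c0 r.
Proof. case: r => [r0 r1 r2 r3]; rewrite /m /a /qN /qsub /qsc /qmul /=; ring. Qed.

Lemma comm_id h : 4 * m * (qN h - c0 h * c0 h) = 4 * (qB h a * qB h a) + qN (qsub (qmul h a) (qmul a h)).
Proof. case: h => [h0 h1 h2 h3]; rewrite /m /a /qB /qN /qsub /qmul /=; ring. Qed.

Lemma norm3 (k0 k1 k2 : R) (E : FQ) : c0 E = 0 ->
  qN (mkFQ k0 (k1 * a1 + k2 * c1 E) (k1 * a2 + k2 * c2 E) (k1 * a3 + k2 * c3 E))
  = k0 * k0 + k1 * k1 * m + k2 * k2 * qN E + 2 * k1 * k2 * qB E a.
Proof. case: E => [e0 e1 e2 e3] /= ->; rewrite /m /a /qB /qN /=; ring. Qed.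

Lemma aa_comm (q : R) : qmul (qsc q a) a = qmul a (qsc q a).
Proof. rewrite /a /qsc /qmul /=; congr mkFQ; ring. Qed.

Lemma qN_sa (c q : R) : qN (qadd (qsc c qone) (qsc q a)) = c * c + q * q * m.
Proof. rewrite /m /a /qN /qadd /qsc /qone /=; ring. Qed.

End Pure.

Lemma qmul_subl x y z : qmul (qsub x y) z = qsub (qmul x z) (qmul y z).
Proof. case: x y z => [x0 x1 x2 x3] [y0 y1 y2 y3] [z0 z1 z2 z3]; rewrite /qmul /qsub /=; congr mkFQ; ring. Qed.
Lemma qmul_subr x y z : qmul z (qsub x y) = qsub (qmul z x) (qmul z y).
Proof. case: x y z => [x0 x1 x2 x3] [y0 y1 y2 y3] [z0 z1 z2 z3]; rewrite /qmul /qsub /=; congr mkFQ; ring. Qed.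
Lemma qmul_addl x y z : qmul (qadd x y) z = qadd (qmul x z) (qmul y z).
Proof. case: x y z => [x0 x1 x2 x3] [y0 y1 y2 y3] [z0 z1 z2 z3]; rewrite /qmul /qadd /=; congr mkFQ; ring. Qed.
Lemma qmul_addr x y z : qmul z (qadd x y) = qadd (qmul z x) (qmul z y).
Proof. case: x y z => [x0 x1 x2 x3] [y0 y1 y2 y3] [z0 z1 z2 z3]; rewrite /qmul /qadd /=; congr mkFQ; ring. Qed.
Lemma qmul_one_sc c x : qmul (qsc c qone) x = qmul x (qsc c qone).
Proof. case: x => [x0 x1 x2 x3]; rewrite /qmul /qsc /qone /=; congr mkFQ; ring. Qed.
Lemma qmul_comm_sub c x y : qmul x y = qmul y x ->
  qmul (qsub (qsc c qone) x) y = qmul y (qsub (qsc c qone) x).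
Proof. by move=> h; rewrite qmul_subl qmul_subr h qmul_one_sc. Qed.
Lemma qmul_comm_add x x' y : qmul x y = qmul y x -> qmul x' y = qmul y x' ->
  qmul (qadd x x') y = qmul y (qadd x x').
Proof. by move=> h h'; rewrite qmul_addl qmul_addr h h'. Qed.
Lemma qmul_comm_prod x x' y : qmul x y = qmul y x -> qmul x' y = qmul y x' ->
  qmul (qmul x x') y = qmul y (qmul x x').
Proof. by move=> h h'; rewrite -qmulA h' qmulA h -qmulA. Qed.
Lemma qsub_self x : qsub x x = mkFQ 0 0 0 0.
Proof. by rewrite /qsub !subrr. Qed.
Lemma qN0 : qN (mkFQ 0 0 0 0) = 0.
Proof. by rewrite /qN !mulr0 !subrr addr0. Qed.
Lemma qN_1r r : qN (qsub qone r) = 1 - 2 * c0 r + qN r.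
Proof. case: r => [r0 r1 r2 r3]; rewrite /qN /qsub /qone /=; ring. Qed.
Lemma qN_scone c X : qN (qsub (qsc c qone) X) = c * c - 2 * c * c0 X + qN X.
Proof. case: X => [x0 x1 x2 x3]; rewrite /qN /qsub /qsc /qone /=; ring. Qed.
End Quat.
Arguments qone {R}.

Lemma odd_neq0 (x y : F) : isZ y -> x = 1 + 2 * y -> x != 0.
Proof. by move=> hy -> ; apply/eqP => h; apply: (@F_odd_neq y 0) => //; [apply: isZ0 | rewrite h mulr0]. Qed.



Lemma F5inv : exists v : F, isZ v /\ 5 * v = 1.
Proof.
have e : (5 : F) = 1 + 2 * 2 by ring.
have [v [hv e']] := @F_inv_odd 5 2 (isZ_nat 2) e.
by exists v.
Qed.

Lemma qN_Qf (E : FQ F) : qN E = Qf (c0 E) (c1 E) (c2 E) (c3 E).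
Proof. by []. Qed.

Lemma lemC (a1 a2 a3 mu : F) (m5 : bool) (E : FQ F) (l k : F) :
  mu != 0 -> qN (mkFQ 0 a1 a2 a3) = (if m5 then 5 else 1) * (mu * mu) ->
  c0 E = 0 -> qB E (mkFQ 0 a1 a2 a3) = 0 -> l != 0 -> isZ k ->
  qN E = - (l * l * (1 + 4 * k)) -> False.
Proof.
move=> hmu hm hE0 hB hl hk hN.
case: (F_mod 1 hk) => j [k' [hj hk' ek]].
have : (j == 0) || (j == 1) by lia.
case/orP => /eqP jv; rewrite jv ?mulr0z ?mulr1z expr1 in ek.
  have e1 : 1 + 4 * k = 1 + 8 * k' by rewrite ek; ring.
  case: (F_sqrt hk' e1) => rho erho.
  have hrho : rho != 0.
    apply/eqP => h0; move: erho; rewrite h0 mulr0 e1 => /eqP.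
    apply/negP; apply: (@odd_neq0 _ (4 * k')); first by apply: isZ_mul => //; apply: (isZ_nat 4).
    ring.
  have hQ : Qf (l * rho) (c1 E) (c2 E) (c3 E) = 0.
    move: hN; rewrite qN_Qf hE0 erho /Qf => hN.
    have -> : l * rho * (l * rho) = - (0 * 0 - 2 * (c1 E * c1 E) - 5 * (c2 E * c2 E) + 10 * (c3 E * c3 E)).
      by rewrite hN; ring.
    ring.
  case: (F_aniso hQ) => h0 _ _ _.
  by move/eqP: h0; rewrite mulf_eq0 (negPf hl) (negPf hrho).
case: F5inv => v5 [hv5 e5].
have e2 : (1 + 4 * k) * v5 = 1 + 8 * (k' * v5).
  have -> : (1 : F) + 8 * (k' * v5) = 5 * v5 + 8 * (k' * v5) by rewrite e5.
  rewrite ek; ring.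
case: (F_sqrt (isZ_mul hk' hv5) e2) => rho erho.
have hrho : rho != 0.
  apply/eqP => h0; move: erho; rewrite h0 mulr0 e2 => /eqP.
  apply/negP; apply: (@odd_neq0 _ (4 * (k' * v5))).
    by apply: isZ_mul => //; [apply: (isZ_nat 4) | apply: isZ_mul].
  ring.
have ek5 : 1 + 4 * k = 5 * (rho * rho).
  by rewrite -erho mulrCA e5 mulr1.
pose L := l * rho.
have hL : L != 0 by rewrite mulf_neq0.
have hNL : qN E = - (5 * (L * L)) by rewrite hN ek5 /L; ring.
have h5 : (5 : F) != 0 by apply/eqP => h; move: e5; rewrite h mul0r => /eqP; rewrite eq_sym oner_eq0.
case: m5 hm => hm.
  have := norm3 a1 a2 a3 0 L mu hE0; rewrite hm hB hNL => hn.
  have hQ : qN (mkFQ 0 (L * a1 + mu * c1 E) (L * a2 + mu * c2 E) (L * a3 + mu * c3 E)) = 0.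
    by rewrite hn; ring.
  case: (F_aniso hQ) => _ h1 h2 h3.
  have : qN (mkFQ 0 (L * a1) (L * a2) (L * a3)) = qN (mkFQ 0 (- (mu * c1 E)) (- (mu * c2 E)) (- (mu * c3 E))).
    by rewrite -(subr0 (L * a1)) -h1 -(subr0 (L * a2)) -h2 -(subr0 (L * a3)) -h3 /qN /=; ring.
  have -> : qN (mkFQ 0 (L * a1) (L * a2) (L * a3)) = L * L * qN (mkFQ 0 a1 a2 a3) by rewrite /qN /=; ring.
  have -> : qN (mkFQ 0 (- (mu * c1 E)) (- (mu * c2 E)) (- (mu * c3 E))) = mu * mu * qN E.
    by rewrite (qN_Qf E) hE0 /qN /Qf /=; ring.
  rewrite hm hNL => /eqP; rewrite -subr_eq0.
  have -> : L * L * (5 * (mu * mu)) - mu * mu * - (5 * (L * L)) = 2 * (5 * ((L * mu) * (L * mu))) by ring.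
  by apply/negP; rewrite !mulf_neq0 // F2_neq0.
have := norm3 a1 a2 a3 (L * mu) (2 * L) mu hE0; rewrite hm hB hNL => hn.
have hQ : qN (mkFQ (L * mu) (2 * L * a1 + mu * c1 E) (2 * L * a2 + mu * c2 E) (2 * L * a3 + mu * c3 E)) = 0.
  by rewrite hn; ring.
case: (F_aniso hQ) => h0 _ _ _.
by move/eqP: h0; rewrite mulf_eq0 (negPf hL) (negPf hmu).
Qed.

Lemma nr_id (K : fieldType) (A B G D : K) : (2 : K) != 0 ->
  qN (mkFQ ((2 * A + B) / 2) ((2 * G + D) / 2) (B / 2) (D / 2))
  = A * A + A * B - B * B - 2 * (G * G) - 2 * (G * D) + 2 * (D * D).
Proof. move=> h2; rewrite /qN /=; field; exact: h2. Qed.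

Ltac zz := repeat first [ assumption | exact: (isZ_nat 2) | exact: (isZ_nat 4) | exact: isZ1 | exact: isZ0
  | apply: isZ_add | apply: isZ_sub | apply: isZ_mul | apply: isZ_opp ].

Lemma divsq2 (K : fieldType) (x p : K) : p != 0 -> x / p * (x / p) * (p * p) = x * x.
Proof. by move=> hp; field. Qed.

Lemma F8 : (8 : F) = 2 ^+ 3. Proof. by rewrite !exprS expr0; ring. Qed.

Lemma good_alpha (m5 : bool) (al : F) (c : F) : isZ c -> al = 1 + 4 * c ->
  exists p q : F, al = p * p + (if m5 then 5 else 1) * (q * q).
Proof.
move=> hc eal; case: (F_mod 1 hc) => j [c' [hj hc' ec]].
have : (j == 0) || (j == 1) by lia.
case/orP => /eqP jv; rewrite jv ?mulr0z ?mulr1z expr1 in ec.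
  have e1 : al = 1 + 8 * c' by rewrite eal ec; ring.
  case: (F_sqrt hc' e1) => p ep; exists p, 0; by rewrite ep mulr0 mulr0 addr0.
case: m5.
  have e1 : al - 20 = 1 + 8 * (c' - 2) by rewrite eal ec; ring.
  case: (F_sqrt (isZ_sub hc' (isZ_nat 2)) e1) => p ep; exists p, 2.
  by rewrite -ep; ring.
have e1 : al - 4 = 1 + 8 * c' by rewrite eal ec; ring.
case: (F_sqrt hc' e1) => p ep; exists p, 2.
by rewrite -ep; ring.
Qed.

Lemma mainF (a1 a2 a3 mu : F) (m5 : bool) (A B G D w s : F) (t : nat) :
  let a := mkFQ 0 a1 a2 a3 in
  let r := mkFQ ((2 * A + B) / 2) ((2 * G + D) / 2) (B / 2) (D / 2) in
  let z := qsub a (qmul (qmul r a) (qconj r)) in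
  isZ A -> isZ B -> isZ G -> isZ D -> (3 <= t)%N -> mu != 0 ->
  qN a = (if m5 then 5 else 1) * (mu * mu) ->
  qN z * qN a = s * s -> qN z * qN a != 0 ->
  isZ w -> qN z = w * (2 ^+ t * 2 ^+ t * qN a) ->
  exists X Y Z : F, X != 0 /\ Z * Z = qN (qsub qone r) * (X * X) + (- qN a) * (Y * Y).
Proof.
move=> a r z hA hB hG hD ht hmu hm hs hs0 hw hz.
have hm0 : qN a != 0 by move: hs0; rewrite mulf_eq0 negb_or => /andP [].
move: hm hs hs0 hz hm0; set m := qN a => hm hs hs0 hz hm0.
have hnI : isZ (qN r).
  rewrite /r nr_id ?F2_neq0 //.
  zz.
pose W := s / m.
have eWm : W * m = s by rewrite /W divfK.
have eW : m * m * (W * W) = m * qN z.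
  by rewrite (_ : m * m * (W * W) = (W * m) * (W * m)); [rewrite eWm -hs mulrC | ring].
have W2 : W * W = w * (2 ^+ t * 2 ^+ t).
  apply: (mulfI (mulf_neq0 hm0 hm0)); rewrite eW hz; ring.
pose W1 := W / 2 ^+ t.
have h2t : (2 : F) ^+ t != 0 by rewrite expf_neq0 // F2_neq0.
have hW1 : isZ W1.
  apply: F_sq_int; have -> : W1 * W1 = w; last by [].
  apply: (mulIf (mulf_neq0 h2t h2t)); rewrite -W2 /W1.
  exact: divsq2.
pose W0 := 2 ^+ (t - 3) * W1.
have hW0 : isZ W0 by apply: isZ_mul => //; apply: isZ_exp; apply: (isZ_nat 2).
have eW0 : W = 8 * W0.
  rewrite /W0 F8 mulrA -exprD subnKC // /W1 mulrC divfK //.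
pose E := qadd (qsc m r) (qmul (qmul a r) a).
have hNE : qN E = m * m * (W * W - (qN r - 1) * (qN r - 1)).
  by rewrite /E /m /a I1 -/a -/m -/z -eW; ring.
have bad : forall (e : nat) (o y : F), (e <= 2)%N -> isZ y -> o = 1 + 2 * y -> qN r - 1 = 2 ^+ e * o -> False.
  move=> e o y he hy eo hd.
  case: (F_inv_odd hy eo) => ov [hov eov].
  pose c := (2 : F) ^+ (2 - e).
  have pc : (2 : F) ^+ e * c = 4 by rewrite /c -exprD subnKC // !exprS expr0; ring.
  have ho : o != 0 by apply: (odd_neq0 hy).
  apply: (@lemC a1 a2 a3 mu m5 E (m * 2 ^+ e * o) (- ((c * W0 * ov) * (c * W0 * ov)))).
  - exact: hmu.
  - exact: hm.
  - exact: Epure.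
  - exact: EB.
  - by rewrite !mulf_neq0 // expf_neq0 // F2_neq0.
  - apply: isZ_opp; apply: isZ_mul; apply: isZ_mul => //; try apply: isZ_mul => //; apply: isZ_exp; apply: (isZ_nat 2).
  rewrite hNE hd eW0.
  apply/eqP; rewrite -subr_eq0; apply/eqP.
  transitivity (4 * (m * m) * (W0 * W0) * (16 - (2 ^+ e * c) * (2 ^+ e * c) * ((o * ov) * (o * ov)))).
    move: (2 ^+ e : F) => p; ring.
  by rewrite pc eov mulr1 (_ : (16 : F) - 4 * 4 * 1 = 0) ?mulr0 //; ring.
case: (F_mod 3 hnI) => j [n' [hj hn' en]].
have hn'2 (k : int) : isZ (k%:~R + n'). by apply: isZ_add => //; apply: isZ_int.
have : [|| j == 0, j == 1, j == 2, j == 3, j == 4, j == 5, j == 6 | j == 7] by lia.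
move=> /orP[/eqP jv|/orP[/eqP jv|/orP[/eqP jv|/orP[/eqP jv|/orP[/eqP jv|/orP[/eqP jv|/orP[/eqP jv|/eqP jv]]]]]]]; rewrite jv in en.
- exfalso; apply: (@bad 0 (qN r - 1) (-1 + 4 * n')) => //.
  + by apply: isZ_add; [apply: (isZ_int (-1)) | apply: isZ_mul => //; apply: (isZ_nat 4)].
  + by rewrite en; ring.
  + by rewrite expr0 mul1r.
-
  pose al := 1 + 4 * (n' + W0).
  have hal : 2 * al = 1 + qN r + W by rewrite /al en eW0 /=; ring.
  have hal0 : al != 0 by apply: (@odd_neq0 _ (2 * (n' + W0))); [zz | rewrite /al; ring].
  case: (@good_alpha m5 al (n' + W0)) => //; first by zz.
  move=> p [q ealpha].
  pose X := qsub (qsc m r) (qmul (qmul a r) a).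
  pose K := qsub (qsc (2 * m * al) qone) X.
  pose be := qadd (qsc (mu * p) qone) (qsc (- q) a).
  pose h := qmul K be.
  have cX : qmul X a = qmul a X by rewrite /X /a /m Xcomm.
  have cK : qmul K a = qmul a K by apply: qmul_comm_sub.
  have cb : qmul be a = qmul a be.
    by apply: qmul_comm_add; [rewrite qmul_one_sc | rewrite /a aa_comm].
  have ch : qmul h a = qmul a h by apply: qmul_comm_prod.
  have NK : qN K = 4 * (m * m) * al * qN (qsub qone r).
    rewrite /K qN_scone /X Xre I2 -/a -/m -/z qN_1r.
    rewrite -eW.
    have -> : 4 * (m * m) * al * (1 - 2 * c0 r + qN r)
      = 2 * m * al * (2 * m * al) - 2 * (2 * m * al) * (2 * m * c0 r)
        + (m * m * ((1 + qN r) * (1 + qN r)) - m * m * (W * W))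
        - m * m * ((2 * al - 1 - qN r) * (2 * al - 1 - qN r) - W * W) by ring.
    by rewrite hal (_ : 1 + qN r + W - 1 - qN r = W); [rewrite subrr mulr0 subr0 | ring].
  have Nbe : qN be = mu * mu * al.
    rewrite /be /a qN_sa -/a -/m hm ealpha; ring.
  have Nh : qN h = qN (qsub qone r) * ((2 * m * mu * al) * (2 * m * mu * al)).
    by rewrite /h qN_mul NK Nbe; ring.
  have ci := comm_id a1 a2 a3 h; rewrite -/a -/m ch qsub_self qN0 addr0 in ci.
  have h4 : (4 : F) != 0 by rewrite (_ : (4 : F) = 2 * 2); [rewrite mulf_neq0 // F2_neq0 | ring].
  have ci' : m * (qN h - c0 h * c0 h) = qB h a * qB h a.
    by apply: (mulfI h4); rewrite mulrA ci.
  exists (2 * m * mu * al), (qB h a / m), (c0 h); split.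
    by rewrite !mulf_neq0 // F2_neq0.
  apply: (mulfI hm0).
  have eY : qB h a / m * m = qB h a by rewrite divfK.
  move: Nh ci' eY; clearbody h; move: (qB h a) (c0 h) (qN h) => Bh h0 Nhv Nh ci' eY.
  move: eY; move: (Bh / m) => Y eY.
  rewrite -Nh; transitivity (m * Nhv - (Y * m) * (Y * m)); last by ring.
  rewrite eY -ci'; ring.
- exfalso; apply: (@bad 0 (qN r - 1) (4 * n')) => //.
  + by apply: isZ_mul => //; apply: (isZ_nat 4).
  + by rewrite en; ring.
  + by rewrite expr0 mul1r.
- exfalso; apply: (@bad 1 ((qN r - 1) / 2) (2 * n')) => //.
  + by apply: isZ_mul => //; apply: (isZ_nat 2).
  + by rewrite en /= (_ : (3 : int)%:~R = 3 :> F) //; apply: (canLR (mulfK F2_neq0)); ring.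
  + by rewrite expr1 mulrC divfK // F2_neq0.
- exfalso; apply: (@bad 0 (qN r - 1) (1 + 4 * n')) => //.
  + by apply: isZ_add; [apply: isZ1 | apply: isZ_mul => //; apply: (isZ_nat 4)].
  + by rewrite en; ring.
  + by rewrite expr0 mul1r.
- exfalso; apply: (@bad 2 ((qN r - 1) / 4) n') => //.
  + have h4 : (4 : F) != 0 by rewrite (_ : (4 : F) = 2 * 2); [rewrite mulf_neq0 // F2_neq0 | ring].
    by rewrite en /= (_ : (5 : int)%:~R = 5 :> F) //; apply: (canLR (mulfK h4)); ring.
  + have h4 : (4 : F) != 0 by rewrite (_ : (4 : F) = 2 * 2); [rewrite mulf_neq0 // F2_neq0 | ring].
    by rewrite (_ : (2 : F) ^+ 2 = 4); [rewrite mulrC divfK | rewrite expr2; ring].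
- exfalso; apply: (@bad 0 (qN r - 1) (2 + 4 * n')) => //.
  + by apply: isZ_add; [apply: (isZ_nat 2) | apply: isZ_mul => //; apply: (isZ_nat 4)].
  + by rewrite en; ring.
  + by rewrite expr0 mul1r.
- exfalso; apply: (@bad 1 ((qN r - 1) / 2) (1 + 2 * n')) => //.
  + by apply: isZ_add; [apply: isZ1 | apply: isZ_mul => //; apply: (isZ_nat 2)].
  + by rewrite en /= (_ : (7 : int)%:~R = 7 :> F) //; apply: (canLR (mulfK F2_neq0)); ring.
  + by rewrite expr1 mulrC divfK // F2_neq0.
Qed.

Definition embq (x : quat) : FQ F := mkFQ (emb (q0 x)) (emb (q1 x)) (emb (q2 x)) (emb (q3 x)).

Lemma embQa : emb Qa = 2. Proof. by rewrite /Qa emb_const. Qed.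
Lemma embQb : emb Qb = 5. Proof. by rewrite /Qb emb_const. Qed.

Lemma embq_mul x y : embq (quat_mul x y) = qmul (embq x) (embq y).
Proof.
rewrite /embq /quat_mul /q0 /q1 /q2 /q3 /mkq /=.
rewrite !(emb_add, emb_sub, emb_mul, embQa, embQb) /qmul /=.
congr mkFQ; ring.
Qed.
Lemma embq_sub x y : embq (quat_sub x y) = qsub (embq x) (embq y).
Proof. by rewrite /embq /quat_sub /q0 /q1 /q2 /q3 /mkq /= !emb_sub. Qed.
Lemma embq_conj x : embq (quat_conj x) = qconj (embq x).
Proof. by rewrite /embq /quat_conj /q0 /q1 /q2 /q3 /mkq /= !emb_opp. Qed.
Lemma embq_one : embq quat_one = qone.
Proof. by rewrite /embq /quat_one /q0 /q1 /q2 /q3 /mkq /= !emb_const. Qed.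
Lemma emb_qnorm x : emb (qnorm x) = qN (embq x).
Proof.
rewrite /qnorm /embq /qN /=.
rewrite !(emb_add, emb_sub, emb_mul, embQa, embQb); ring.
Qed.
Lemma embq_scale c x : embq (quat_scale c x) = qsc (emb c) (embq x).
Proof. by rewrite /embq /quat_scale /q0 /q1 /q2 /q3 /mkq /= !emb_mul. Qed.
Lemma qN_sc (c : F) (x : FQ F) : qN (qsc c x) = c * c * qN x.
Proof. by case: x => *; rewrite /qN /qsc /=; ring. Qed.

Lemma embq_OD al be ga de :
  embq (OD_elt al be ga de) =
  mkFQ ((2 * Fof (piZ al) + Fof (piZ be)) / 2) ((2 * Fof (piZ ga) + Fof (piZ de)) / 2)
       (Fof (piZ be) / 2) (Fof (piZ de) / 2).
Proof.
rewrite /embq /OD_elt /q0 /q1 /q2 /q3 /mkq /= !emb_half.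
by rewrite !piZ_addE !piZ_mulE !Fof_add !Fof_mul !Fof_piZconst.
Qed.

Lemma Q2nzE p : Q2nz p <-> emb p != 0.
Proof.
rewrite /Q2nz; split.
  by move=> h; apply/eqP => e; apply: h; apply/emb_eq; rewrite e emb_const.
by move=> /eqP h e; apply: h; move/emb_eq: e; rewrite emb_const.
Qed.

Lemma kstar_false (a1 : quat) (u : Z2) (t : nat) al be ga de :
  pure a1 -> nonminimal_defect_unit u ->
  (exists q : Q2, Q2nzsq q /\ Q2eq (qnorm a1) (Q2mul (Q2opp (Q2of u)) q)) ->
  (3 <= t)%N -> kstar a1 t (OD_elt al be ga de) -> False.
Proof.
move=> hpure [sg [[v hv] hu]] [q [[hq0 [S hS]] hN]] ht [hil hsq hdiv].
have e0 : emb (q0 a1) = 0 by move/emb_eq: hpure; rewrite emb_const.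
have ea : embq a1 = mkFQ 0 (emb (q1 a1)) (emb (q2 a1)) (emb (q3 a1)) by rewrite /embq e0.
pose sF := Fof (piZ sg).
have hsv : sF * Fof (piZ v) = 1.
  by move/piZP: hv; rewrite piZ_mulE piZ1 /sF -Fof_mul => ->; rewrite Fof1.
have hs0 : sF != 0 by apply/eqP => e; move: hsv; rewrite e mul0r => /eqP; rewrite eq_sym oner_eq0.
move/Q2nzE: hq0 => hq0.
move/emb_eq: hS; rewrite emb_mul => hS.
have hSF : emb S != 0 by apply/eqP => e; move: hq0; rewrite hS e mulr0 eqxx.
move/emb_eq: hN; rewrite emb_mul emb_opp emb_of emb_qnorm hS => hN.
pose mu := sF * emb S.
have hmu : mu != 0 by rewrite mulf_neq0.
have [m5 hm5] : exists m5 : bool, qN (embq a1) = (if m5 then 5 else 1) * (mu * mu).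
  case: hu => /piZP hu.
    exists false; rewrite hN hu piZ_oppE piZ_mulE Fof_opp Fof_mul /mu -/sF; ring.
  exists true; rewrite hN hu piZ_oppE !piZ_mulE Fof_opp !Fof_mul Fof_piZconst /mu -/sF; ring.
move: hsq => [/Q2nzE hsq0 [s0 hs0']].
move/emb_eq: hs0'; rewrite !emb_mul !emb_qnorm => hsq.
rewrite emb_mul !emb_qnorm in hsq0.
move: hdiv => [_ [w0 hw0]].
move/emb_eq: hw0; rewrite emb_mul emb_of !emb_qnorm embq_scale qN_sc emb_const => hw0.
rewrite !embq_sub !embq_mul embq_conj embq_OD ea in hsq hsq0 hw0 hm5.
have := @mainF (emb (q1 a1)) (emb (q2 a1)) (emb (q3 a1)) mu m5
  (Fof (piZ al)) (Fof (piZ be)) (Fof (piZ ga)) (Fof (piZ de)) (Fof (piZ w0)) (emb s0) t.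
move=> /(_ _ _ _ _ ht hmu hm5 hsq hsq0).
case.
- by exists (piZ al).
- by exists (piZ be).
- by exists (piZ ga).
- by exists (piZ de).
- by exists (piZ w0).
- by rewrite hw0 (_ : ((2 ^+ t : int)%:~R : F) = 2 ^+ t) ?rmorphXn //; ring.
move=> X [Y [Z [hX hZ]]].
apply: hil.
case: (emb_surj X) => X' eX; case: (emb_surj Y) => Y' eY; case: (emb_surj Z) => Z' eZ.
exists X', Y', Z'; split; first by left; apply/Q2nzE; rewrite eX.
apply/emb_eq; rewrite emb_mul emb_add !emb_mul emb_opp !emb_qnorm eX eY eZ hZ.
by rewrite embq_sub embq_one embq_OD ea.
Qed.


Theorem proposition5p2 (a1 : quat) (u : Z2) (t : nat) :
  pure a1 ->
  nonminimal_defect_unit u ->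
  (exists q : Q2, Q2nzsq q /\ Q2eq (qnorm a1) (Q2mul (Q2opp (Q2of u)) q)) ->
  (t = 3%N \/ t = 4%N) ->
  ((exists al be ga de : Z2, kstar a1 t (OD_elt al be ga de)) <->
   (exists a b c d : int,
      [/\ 0 <= a < 2 ^+ (t + 3), 0 <= b < 2 ^+ (t + 3),
          0 <= c < 2 ^+ (t + 3) & 0 <= d < 2 ^+ (t + 3)] /\
      kstar a1 t (OD_elt (Z2const a) (Z2const b) (Z2const c) (Z2const d)))).
Proof.
move=> hpure hu hq ht; split.
  case=> al [be [ga [de hk]]]; exfalso.
  apply: (kstar_false hpure hu hq _ hk).
  by case: ht => ->.
case=> a [b [c [d [_ hk]]]].
by exists (Z2const a), (Z2const b), (Z2const c), (Z2const d).
Qed.
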